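(* If a state $\Phi$ satisfies $D_{\min,\mathbb{F}}(\Phi)=D_{s,\mathbb{F}}(\Phi)=:r$, then for every $\epsilon\in[0,1)$, $$D^\epsilon_{H,\mathbb{F}}(\Phi)=r+\log\tfrac{1}{1-\epsilon},\qquad D^\epsilon_{\max,\mathbb{F}}(\Phi)=D^\epsilon_{s,\mathbb{F}}(\Phi)=\max\{r-\log\tfrac{1}{1-\epsilon},0\}.$$ If instead $\Phi$ satisfies $D_{\min,\mathrm{aff}(\mathbb{F})}(\Phi)=D_{\max,\mathbb{F}}(\Phi)=:r$, then for every $\epsilon\in[0,1)$, $$D^\epsilon_{H,\mathrm{aff}(\mathbb{F})}(\Phi)=D^\epsilon_{H,\mathbb{F}}(\Phi)=r+\log\tfrac{1}{1-\epsilon},\qquad D^\epsilon_{\max,\mathbb{F}}(\Phi)=\max\{r-\log\tfrac{1}{1-\epsilon},0\}.$$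
   Context: Finite-dimensional Hilbert space, $\log$ base 2. $\mathbb{F}$ is a convex and closed set of (free) states. $F(\rho,\sigma)=\|\sqrt\rho\sqrt\sigma\|_1^2$. $D_H^\epsilon(\rho\|\sigma)=\sup\{-\log\mathrm{Tr}[P\sigma]:0\le P\le\mathbb{1},\mathrm{Tr}[P\rho]\ge1-\epsilon\}$ (also used for Hermitian $\sigma$); $D_{\min}(\rho\|\sigma)=D_H^0(\rho\|\sigma)=-\log\mathrm{Tr}[\Pi_\rho\sigma]$. $D^\epsilon_{H,\mathbb{F}}(\rho)=\inf_{\sigma\in\mathbb{F}}D_H^\epsilon(\rho\|\sigma)$, $D_{\min,\mathbb{F}}=D^0_{H,\mathbb{F}}$; $\mathrm{aff}(\mathbb{F})$ is the affine hull, $D^\epsilon_{H,\mathrm{aff}(\mathbb{F})}(\rho)=\inf_{\sigma\in\mathrm{aff}(\mathbb{F})}D^\epsilon_H(\rho\|\sigma)$, $D_{\min,\mathrm{aff}(\mathbb{F})}=D^0_{H,\mathrm{aff}(\mathbb{F})}$. $D_{\max,\mathbb{F}}(\rho)=\inf\{\log(1+s):\frac{\rho+s\tau}{1+s}\in\mathbb{F},\tau\text{ a state}\}$; $D_{s,\mathbb{F}}(\rho)=\inf\{\log(1+s):\frac{\rho+s\tau}{1+s}\in\mathbb{F},\tau\in\mathbb{F}\}$. Smoothed: $D^\epsilon_{\max,\mathbb{F}}(\rho)=\inf\{D_{\max,\mathbb{F}}(\rho'):F(\rho',\rho)\ge1-\epsilon\}$ and $D^\epsilon_{s,\mathbb{F}}(\rho)=\inf\{D_{s,\mathbb{F}}(\rho'):F(\rho',\rho)\ge1-\epsilon\}$,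 infima over states $\rho'$. *)

(* Defs.v *)
From HB Require Import structures.
From mathcomp Require Import all_boot all_order all_algebra.
From mathcomp Require Import complex.
From mathcomp Require Import all_classical all_reals.
From mathcomp Require Import ereal topology normedtype exp.
Set Implicit Arguments. Unset Strict Implicit. Unset Printing Implicit Defensive.
Import Order.TTheory GRing.Theory Num.Theory.
Import numFieldNormedType.Exports.
Local Open Scope classical_set_scope.
Local Open Scope ring_scope.

Section Quantum.
Variables (R : realType) (n : nat).
Local Notation C := R[i].
Local Notation M := 'M[C]_n.

Definition adjmx (m k : nat) (A : 'M[C]_(m, k)) : 'M[C]_(k, m) :=
  (map_mx Num.conj A)^T.

(* positive semidefinite: <v, A v> >= 0 for all v (implies Hermitian over C) *)
Definition psd (A : M) : Prop :=
  forall v : 'cV[C]_n, 0 <= (adjmx v *m A *m v) 0 0.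

Definition is_state (rho : M) : Prop := psd rho /\ \tr rho = 1.

Definition is_effect (P : M) : Prop := psd P /\ psd (1%:M - P).

Definition psd_sqrt (A : M) : M := xget 0 [set S : M | psd S /\ S *m S = A].

Definition trnorm (A : M) : R := complex.Re (\tr (psd_sqrt (adjmx A *m A))).

Definition fidelity (rho sigma : M) : R :=
  trnorm (psd_sqrt rho *m psd_sqrt sigma) ^+ 2.

Definition log2 (t : R) : R := ln t / ln 2.

Definition mlog2 (t : R) : \bar R :=
  if t <= 0 then +oo%E else (- log2 t)%:E.

Definition DH (eps : R) (rho sigma : M) : \bar R :=
  ereal_sup [set mlog2 (complex.Re (\tr (P *m sigma))) | P in
             [set P : M | is_effect P /\ 1 - eps <= complex.Re (\tr (P *m rho))]].

Definition DH_over (eps : R) (S : set M) (rho : M) : \bar R :=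
  ereal_inf [set DH eps rho sigma | sigma in S].

Definition aff (S : set M) : set M :=
  [set X : M | exists (k : nat) (lam : 'I_k -> R) (sig : 'I_k -> M),
      (forall i, S (sig i)) /\ \sum_(i < k) lam i = 1 /\
      X = \sum_(i < k) (lam i)%:C%C *: sig i].

Definition DminF (S : set M) (rho : M) : \bar R := DH_over 0 S rho.
Definition DminAff (S : set M) (rho : M) : \bar R := DH_over 0 (aff S) rho.

Definition DmaxF (S : set M) (rho : M) : \bar R :=
  ereal_inf [set (log2 (1 + s))%:E | s in
    [set s : R | 0 <= s /\ exists tau : M, is_state tau /\
                  S (((1 + s)^-1)%:C%C *: (rho + s%:C%C *: tau))]].

Definition DsF (S : set M) (rho : M) : \bar R :=
  ereal_inf [set (log2 (1 + s))%:E | s in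
    [set s : R | 0 <= s /\ exists tau : M, S tau /\
                  S (((1 + s)^-1)%:C%C *: (rho + s%:C%C *: tau))]].

Definition DmaxF_eps (eps : R) (S : set M) (rho : M) : \bar R :=
  ereal_inf [set DmaxF S rho' | rho' in
    [set rho' : M | is_state rho' /\ 1 - eps <= fidelity rho' rho]].

Definition DsF_eps (eps : R) (S : set M) (rho : M) : \bar R :=
  ereal_inf [set DsF S rho' | rho' in
    [set rho' : M | is_state rho' /\ 1 - eps <= fidelity rho' rho]].

Definition convex_states (S : set M) : Prop :=
  forall (s1 s2 : M) (t : R), S s1 -> S s2 -> 0 <= t <= 1 ->
    S (t%:C%C *: s1 + (1 - t)%:C%C *: s2).

End Quantum.

Section Closed.
Variables (R : realType) (n : nat).
Local Notation M := 'M[R[i]]_n.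
(* closedness of a set of matrices in the (Euclidean) topology of C^{n x n},
   stated sequentially: limits of entrywise convergent sequences in S stay in S *)
Definition closed_mx (S : set M) : Prop :=
  forall (u : nat -> M) (X : M), (forall k, S (u k)) ->
    (forall i j, ((fun k => complex.Re (u k i j)) @ \oo --> complex.Re (X i j)) /\
                 ((fun k => complex.Im (u k i j)) @ \oo --> complex.Im (X i j))) ->
    S X.
End Closed.

(* Main.v *)
Require Import Defs.
From HB Require Import structures.
From mathcomp Require Import all_boot all_order all_algebra.
From mathcomp Require Import complex.
From mathcomp Require Import all_classical all_reals.
From mathcomp Require Import ereal topology normedtype exp.
From mathcomp Require Import sesquilinear spectral.
From mathcomp.algebra_tactics Require Import ring lra.
Set Implicit Arguments. Unset Strict Implicit. Unset Printing Implicit Defensive.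
Import Order.TTheory GRing.Theory Num.Theory.
Import numFieldNormedType.Exports.
Local Open Scope classical_set_scope.
Local Open Scope ring_scope.
Local Open Scope sesquilinear_scope.
Import Num.Def.
Section Mx.
Variable R : realType.
Local Notation C := R[i].

Lemma adjE m k (A : 'M[C]_(m,k)) : adjmx A = A ^t*.
Proof. by rewrite /adjmx map_trmx. Qed.

Lemma adjmxE m k (A : 'M[C]_(m,k)) i j : adjmx A i j = (A j i)^*.
Proof. by rewrite /adjmx !mxE. Qed.

Lemma adjmxM m k l (A : 'M[C]_(m,k)) (B : 'M[C]_(k,l)) :
  adjmx (A *m B) = adjmx B *m adjmx A.
Proof. by rewrite /adjmx map_mxM trmx_mul. Qed.

Lemma adjmxK m k (A : 'M[C]_(m,k)) : adjmx (adjmx A) = A.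
Proof. by apply/matrixP => i j; rewrite !adjmxE conjCK. Qed.

Lemma adjmxD m k (A B : 'M[C]_(m,k)) : adjmx (A + B) = adjmx A + adjmx B.
Proof. by apply/matrixP => i j; rewrite !mxE rmorphD. Qed.

Lemma adjmxN m k (A : 'M[C]_(m,k)) : adjmx (- A) = - adjmx A.
Proof. by apply/matrixP => i j; rewrite !mxE rmorphN. Qed.

Lemma adjmxB m k (A B : 'M[C]_(m,k)) : adjmx (A - B) = adjmx A - adjmx B.
Proof. by rewrite adjmxD adjmxN. Qed.

Lemma adjmxZ m k (c : C) (A : 'M[C]_(m,k)) : adjmx (c *: A) = c^* *: adjmx A.
Proof. by apply/matrixP => i j; rewrite !mxE rmorphM. Qed.

Lemma adjmx1 m : adjmx (1%:M : 'M[C]_m) = 1%:M.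
Proof. by apply/matrixP => i j; rewrite adjmxE !mxE rmorph_nat eq_sym. Qed.

Lemma adjmx0 m k : adjmx (0 : 'M[C]_(m,k)) = 0.
Proof. by apply/matrixP => i j; rewrite !mxE conjC0. Qed.

Definition bf n (B : 'M[C]_n) (u w : 'cV[C]_n) : C := (adjmx u *m B *m w) 0 0.

Lemma bfDl n (B : 'M[C]_n) u v w : bf B (u + v) w = bf B u w + bf B v w.
Proof. by rewrite /bf adjmxD !mulmxDl mxE. Qed.
Lemma bfDr n (B : 'M[C]_n) u v w : bf B w (u + v) = bf B w u + bf B w v.
Proof. by rewrite /bf mulmxDr mxE. Qed.
Lemma bfZl n (B : 'M[C]_n) c u w : bf B (c *: u) w = c^* * bf B u w.
Proof. by rewrite /bf adjmxZ -!scalemxAl !mxE. Qed.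
Lemma bfZr n (B : 'M[C]_n) c u w : bf B u (c *: w) = c * bf B u w.
Proof. by rewrite /bf -scalemxAr mxE. Qed.
Lemma bfBl n (B1 B2 : 'M[C]_n) u w : bf (B1 - B2) u w = bf B1 u w - bf B2 u w.
Proof. rewrite /bf mulmxBr mulmxBl. rewrite !mxE. by []. Qed.

Lemma adj_delta n (i : 'I_n) : adjmx (delta_mx i 0 : 'cV[C]_n) = delta_mx 0 i.
Proof.
by apply/matrixP => a b; rewrite adjmxE !mxE rmorph_nat andbC.
Qed.

Lemma bf_delta n (B : 'M[C]_n) i j : bf B (delta_mx i 0) (delta_mx j 0) = B i j.
Proof. by rewrite /bf adj_delta -rowE -colE !mxE. Qed.

Lemma bf_conj n (B : 'M[C]_n) u w : (bf B u w)^* = bf (adjmx B) w u.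
Proof.
by rewrite /bf -adjmxE !adjmxM adjmxK mulmxA.
Qed.

Lemma qf0 n (B : 'M[C]_n) : (forall v, bf B v v = 0) -> B = 0.
Proof.
move=> H; apply/matrixP => i j; rewrite mxE.
set u := (delta_mx i 0 : 'cV[C]_n); set w := (delta_mx j 0 : 'cV[C]_n).
have h1 := H (u + w); have h2 := H (u + 'i *: w).
rewrite !(bfDl, bfDr, bfZl, bfZr) !H in h1 h2.
rewrite -(bf_delta B i j) -/u -/w.
have e1 : bf B u w = - bf B w u.
  by apply/eqP; rewrite -subr_eq0; apply/eqP; rewrite -h1; ring.
have e2 : 'i * (bf B u w *+ 2) = 0.
  by rewrite -h2 conjCi e1; ring.
have e3 : bf B u w *+ 2 = 0.
  have -> : bf B u w *+ 2 = - ('i * ('i * (bf B u w *+ 2))).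
    by rewrite mulrA -expr2 sqrCi mulN1r opprK.
  by rewrite e2 mulr0 oppr0.
by move: e3 => /eqP; rewrite mulrn_eq0 /= => /eqP.
Qed.

Lemma psd_herm n (A : 'M[C]_n) : psd A -> adjmx A = A.
Proof.
move=> HA; apply/eqP; rewrite -subr_eq0; apply/eqP/qf0 => v.
rewrite bfBl -bf_conj; apply/eqP; rewrite subr_eq0; apply/eqP.
apply: conj_Creal; apply: ger0_real; exact: HA.
Qed.

End Mx.
Import Num.Def.
Section Mx2.
Variable R : realType.
Local Notation C := R[i].

Lemma psd_conj n k (M : 'M[C]_(k, n)) (A : 'M[C]_k) : psd A -> psd (adjmx M *m A *m M).
Proof.
move=> HA v; have := HA (M *m v).
by rewrite adjmxM !mulmxA.
Qed.

Lemma qf_sum n (v : 'cV[C]_n) (d : 'rV[C]_n) :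
  (adjmx v *m diag_mx d *m v) 0 0 = \sum_k d 0 k * ((v k 0) * (v k 0)^*).
Proof.
rewrite mxE; apply: eq_bigr => k _.
rewrite mul_mx_diag !mxE; ring.
Qed.

Lemma psd_diag n (d : 'rV[C]_n) : (forall i, 0 <= d 0 i) -> psd (diag_mx d).
Proof.
move=> Hd v; rewrite qf_sum; apply: sumr_ge0 => k _.
by apply: mulr_ge0; [exact: Hd | exact: mul_conjC_ge0].
Qed.

Lemma psd1 n : psd (1%:M : 'M[C]_n).
Proof.
have -> : (1%:M : 'M[C]_n) = diag_mx (const_mx 1).
  by apply/matrixP => i j; rewrite !mxE.
by apply: psd_diag => i; rewrite mxE ler01.
Qed.

Lemma psd_adjmul n k (X : 'M[C]_(k, n)) : psd (adjmx X *m X).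
Proof. have := psd_conj X (@psd1 k); by rewrite mulmx1. Qed.

Lemma psd_add n (A B : 'M[C]_n) : psd A -> psd B -> psd (A + B).
Proof.
move=> HA HB v; rewrite mulmxDr mulmxDl mxE.
exact: addr_ge0 (HA v) (HB v).
Qed.

Lemma psd_scale n (c : C) (A : 'M[C]_n) : 0 <= c -> psd A -> psd (c *: A).
Proof.
move=> Hc HA v; rewrite -scalemxAr -scalemxAl mxE.
exact: mulr_ge0 Hc (HA v).
Qed.

Lemma psd0 n : psd (0 : 'M[C]_n).
Proof. by move=> v; rewrite mulmx0 mul0mx mxE. Qed.

Lemma psd_diag_ge0 n (A : 'M[C]_n) i : psd A -> 0 <= A i i.
Proof. by move=> HA; rewrite -bf_delta; apply: HA. Qed.

Lemma psd_tr_ge0 n (A : 'M[C]_n) : psd A -> 0 <= \tr A.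
Proof. by move=> HA; rewrite /mxtrace; apply: sumr_ge0 => i _; apply: psd_diag_ge0. Qed.

Lemma psd_spec n (A : 'M[C]_n) : psd A -> exists (U : 'M[C]_n) (d : 'rV[C]_n),
  [/\ U *m adjmx U = 1%:M, adjmx U *m U = 1%:M, (forall i, 0 <= d 0 i) &
      A = adjmx U *m diag_mx d *m U].
Proof.
move=> HA.
have Hh : A \is hermsymmx.
  by apply/is_hermitianmxP; rewrite expr0 scale1r -adjE psd_herm.
have /orthomx_spectralP HAe := hermitian_normalmx Hh.
set U := spectralmx A in HAe; set d := spectral_diag A in HAe.
have Uu : U \is unitarymx by apply: spectral_unitarymx.
have U1 : U *m adjmx U = 1%:M by rewrite adjE; apply/unitarymxP.
have U2 : adjmx U *m U = 1%:M.
  by rewrite adjE -invmx_unitary // mulVmx // unitarymx_unit.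
have HAe' : A = adjmx U *m diag_mx d *m U by rewrite adjE -invmx_unitary.
exists U, d; split => // i.
have := psd_diag_ge0 i (psd_conj (adjmx U) HA).
rewrite adjmxK HAe' !mulmxA U1 mul1mx -!mulmxA U1 mulmx1.
by rewrite mxE eqxx mulr1n.
Qed.

Lemma psd_sqrt_ex n (A : 'M[C]_n) : psd A -> exists S : 'M[C]_n, psd S /\ S *m S = A.
Proof.
move=> /psd_spec [U [d [U1 U2 Hd ->]]].
exists (adjmx U *m diag_mx (\row_i sqrtC (d 0 i)) *m U); split.
  by apply: psd_conj; apply: psd_diag => i; rewrite mxE sqrtC_ge0.
rewrite -!mulmxA [U *m (_ *m _)]mulmxA [U *m adjmx U]U1 mul1mx.
rewrite [diag_mx _ *m (diag_mx _ *m U)]mulmxA mulmx_diag; do 2 congr (_ *m _); congr diag_mx.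
by apply/rowP => i; rewrite !mxE -expr2 sqrtCK.
Qed.

Lemma psd_sqrtP n (A : 'M[C]_n) : psd A ->
  psd (psd_sqrt A) /\ psd_sqrt A *m psd_sqrt A = A.
Proof. move=> HA; rewrite /psd_sqrt; exact: (xgetPex 0 (psd_sqrt_ex HA)). Qed.

Lemma psd_sqrt_herm n (A : 'M[C]_n) : psd A -> adjmx (psd_sqrt A) = psd_sqrt A.
Proof. by move=> /psd_sqrtP [H _]; apply: psd_herm. Qed.

Lemma tr_psd_mul n (A B : 'M[C]_n) : psd A -> psd B -> 0 <= \tr (A *m B).
Proof.
move=> HA HB; have [HH HHe] := psd_sqrtP HB.
set H := psd_sqrt B in HH HHe.
rewrite -HHe mulmxA mxtrace_mulC mulmxA.
rewrite -{1}(psd_herm HH); apply: psd_tr_ge0; exact: psd_conj.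
Qed.

End Mx2.
Import Num.Def.
Section Mx3.
Variable R : realType.
Local Notation C := R[i].

Lemma ge0_RRe (x : C) : 0 <= x -> x = (complex.Re x)%:C%C.
Proof. by move=> hx; rewrite RRe_real // ger0_real. Qed.

Lemma ge0_Re (x : C) : 0 <= x -> 0 <= complex.Re x.
Proof. by move=> hx; move: (hx); rewrite (ge0_RRe hx) lecR. Qed.

Lemma ge0_conj (x : C) : 0 <= x -> x^* = x.
Proof. by move=> hx; apply: conj_Creal; apply: ger0_real. Qed.

Lemma Re_sum (I : finType) (f : I -> C) :
  complex.Re (\sum_i f i) = \sum_i complex.Re (f i).
Proof. by rewrite raddf_sum. Qed.

Lemma mul_adj_diag n (K : 'M[C]_n) j :
  (K *m adjmx K) j j = \sum_k K j k * (K j k)^*.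
Proof. by rewrite mxE; apply: eq_bigr => k _; rewrite adjmxE. Qed.

Lemma mul_adj_diag_ge n (K : 'M[C]_n) j :
  K j j * (K j j)^* <= (K *m adjmx K) j j.
Proof.
rewrite mul_adj_diag (bigD1 j) //= lerDl; apply: sumr_ge0 => k _.
exact: mul_conjC_ge0.
Qed.

Lemma tr_conjU n (U A : 'M[C]_n) : adjmx U *m U = 1%:M ->
  \tr (U *m A *m adjmx U) = \tr A.
Proof. by move=> U2; rewrite mxtrace_mulC mulmxA U2 mul1mx. Qed.

Lemma tr_conjU' n (U A : 'M[C]_n) : U *m adjmx U = 1%:M ->
  \tr (adjmx U *m A *m U) = \tr A.
Proof. by move=> U1; rewrite mxtrace_mulC mulmxA U1 mul1mx. Qed.

Lemma fid_lb n (rho Phi : 'M[C]_n) (p : R) : is_state Phi -> psd rho -> 0 <= p ->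
  psd (rho - p%:C%C *: Phi) -> p <= fidelity rho Phi.
Proof.
move=> [HPhi trPhi] Hrho Hp Hdiff.
have [HR0 R0e] := psd_sqrtP Hrho; have [HQ Qe] := psd_sqrtP HPhi.
rewrite /fidelity /trnorm.
set R0 := psd_sqrt rho in HR0 R0e *; set Q := psd_sqrt Phi in HQ Qe *.
set Y := adjmx (R0 *m Q) *m (R0 *m Q).
have HY : psd Y := psd_adjmul _.
have Ye : Y = Q *m rho *m Q.
  by rewrite /Y adjmxM !psd_herm // -R0e !mulmxA.
have [HS Se] := psd_sqrtP HY.
set S := psd_sqrt Y in HS Se *.
have [U [d [U1 U2 Hd Sd]]] := psd_spec HS.
set G := U *m Phi *m adjmx U.
have HG : psd G by have := psd_conj (adjmx U) HPhi; rewrite adjmxK.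
have trG : \tr G = 1 by rewrite tr_conjU.
have trS : \tr S = \sum_i d 0 i by rewrite Sd tr_conjU' // mxtrace_diag.
have key : forall i, p%:C%C * (G i i * (G i i)^*) <= d 0 i * d 0 i.
  move=> i.
  have HW : psd (U *m (Y - p%:C%C *: (Phi *m Phi)) *m adjmx U).
    have -> : Y - p%:C%C *: (Phi *m Phi) = adjmx Q *m (rho - p%:C%C *: Phi) *m Q.
      rewrite psd_herm // mulmxBr mulmxBl Ye -scalemxAr -scalemxAl -Qe !mulmxA.
      by [].
    by have := psd_conj (adjmx U) (psd_conj Q Hdiff); rewrite adjmxK !mulmxA.
  have := psd_diag_ge0 i HW.
  have -> : U *m (Y - p%:C%C *: (Phi *m Phi)) *m adjmx U =
    (U *m S *m adjmx U) *m (U *m S *m adjmx U) - p%:C%C *: (G *m G).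
    rewrite mulmxBr mulmxBl -Se /G -!scalemxAr -!scalemxAl.
    congr (_ - _ *: _).
      by rewrite !mulmxA -[U *m S *m adjmx U *m U]mulmxA U2 mulmx1.
    by rewrite !mulmxA -[U *m Phi *m adjmx U *m U]mulmxA U2 mulmx1.
  have -> : U *m S *m adjmx U = diag_mx d.
    by rewrite Sd !mulmxA U1 mul1mx -mulmxA U1 mulmx1.
  have ee : forall (A B : 'M[C]_n) (c : C), (A - c *: B) i i = A i i - c * B i i.
    by move=> A B c; rewrite !mxE.
  rewrite ee subr_ge0 => h.
  move: h; rewrite mulmx_diag [X in _ <= X]mxE eqxx mulr1n [X in _ <= X]mxE => h; refine (le_trans _ h).
  rewrite ler_wpM2l //; first by rewrite lecR.
  by have := mul_adj_diag_ge G i; rewrite psd_herm.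
pose g i := complex.Re (G i i); pose l i := complex.Re (d 0 i).
have gC i : G i i = (g i)%:C%C by apply: ge0_RRe; apply: psd_diag_ge0.
have lC i : d 0 i = (l i)%:C%C by apply: ge0_RRe.
have g0 i : 0 <= g i by apply: ge0_Re; apply: psd_diag_ge0.
have l0 i : 0 <= l i by apply: ge0_Re.
have keyR i : p * (g i * g i) <= l i * l i.
  have := key i; rewrite ge0_conj ?psd_diag_ge0 // gC lC -!rmorphM /=.
  by rewrite lecR.
have sg : \sum_i g i = 1.
  by rewrite /g -Re_sum; move: trG; rewrite /mxtrace => ->.
have sl : complex.Re (\tr S) = \sum_i l i by rewrite trS Re_sum.
rewrite sl.
set s := Num.sqrt p.
have s0 : 0 <= s by apply: sqrtr_ge0.
have ss : s * s = p by rewrite -expr2 sqr_sqrtr.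
have H1 : s <= \sum_i l i.
  rewrite -[s]mulr1 -sg mulr_sumr; apply: ler_sum => i _.
  have := keyR i; have := g0 i; have := l0 i; nra.
have H0 : 0 <= \sum_i l i by apply: sumr_ge0.
nra.
Qed.

End Mx3.
Import Num.Def.
Section Mx4.
Variable R : realType.
Local Notation C := R[i].

Lemma cs_real (I : finType) (a b c : I -> R) : (forall j, 0 <= b j) ->
  (forall j, 0 <= c j) -> (forall j, a j ^+ 2 <= b j * c j) ->
  (\sum_j a j) ^+ 2 <= (\sum_j b j) * (\sum_j c j).
Proof.
move=> hb hc habc.
have E1 : (\sum_j a j) ^+ 2 = \sum_i \sum_j a i * a j.
  by rewrite expr2 mulr_suml; apply: eq_bigr => i _; rewrite mulr_sumr.
have E2 : (\sum_j b j) * (\sum_j c j) = \sum_i \sum_j b i * c j.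
  by rewrite mulr_suml; apply: eq_bigr => i _; rewrite mulr_sumr.
have E3 : (\sum_j b j) * (\sum_j c j) = \sum_i \sum_j b j * c i.
  by rewrite E2 exchange_big.
have key : forall i j, 2 * (a i * a j) <= b i * c j + b j * c i.
  move=> i j.
  have hz : (a i * a j) ^+ 2 <= (b i * c j) * (b j * c i).
    rewrite exprMn; apply: le_trans (ler_pM _ _ (habc i) (habc j)) _.
    - exact: sqr_ge0.
    - exact: sqr_ge0.
    by rewrite le_eqVlt; apply/orP; left; apply/eqP; ring.
  have := hb i; have := hb j; have := hc i; have := hc j.
  have hX : 0 <= b i * c j by apply: mulr_ge0.
  have hY : 0 <= b j * c i by apply: mulr_ge0.
  move: hz hX hY; set z := a i * a j; set X := b i * c j; set Y := b j * c i.
  move=> hz hX hY _ _ _ _.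
  have hXY := sqr_ge0 (X - Y).
  have h1 : (2 * z) ^+ 2 <= (X + Y) ^+ 2.
    move: hXY hz; rewrite !expr2 => hXY hz; nra.
  have h2 : 0 <= X + Y by apply: addr_ge0.
  move: h1 h2; clearbody z X Y; move=> h1 h2; nra.
suff : 2 * (\sum_j a j) ^+ 2 <= 2 * ((\sum_j b j) * (\sum_j c j)).
  by rewrite ler_pM2l.
have two : forall x : R, 2 * x = x + x by move=> x; ring.
have L : 2 * (\sum_j a j) ^+ 2 = \sum_i \sum_j 2 * (a i * a j).
  by rewrite E1 mulr_sumr; apply: eq_bigr => i _; rewrite mulr_sumr.
have Rr : 2 * ((\sum_j b j) * (\sum_j c j)) = \sum_i \sum_j (b i * c j + b j * c i).
  rewrite two {1}E2 E3 -big_split; apply: eq_bigr => i _; by rewrite -big_split.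
rewrite L Rr; apply: ler_sum => i _; apply: ler_sum => j _; exact: key.
Qed.


Lemma col_zero n (Et : 'M[C]_n) j : psd Et -> Et j j = 0 -> forall k, Et k j = 0 /\ Et j k = 0.
Proof.
move=> HE Ej k.
have [HG Ge] := psd_sqrtP HE; set G := psd_sqrt Et in HG Ge.
have Gj : forall l, G l j = 0.
  have : (adjmx G *m G) j j = 0 by rewrite psd_herm // Ge.
  rewrite mxE => /eqP; rewrite psumr_eq0 => [/allP h l|l _]; last first.
    by rewrite adjmxE mulrC mul_conjC_ge0.
  have := h l (mem_index_enum l); rewrite adjmxE mulrC mulf_eq0 conjC_eq0.
  by rewrite orbb => /eqP.
have Ekj : Et k j = 0.
  by rewrite -Ge mxE big1 // => l _; rewrite Gj mulr0.
split => //.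
by rewrite -(psd_herm HE) adjmxE Ekj conjC0.
Qed.

Lemma fid_ub n (rho Phi P : 'M[C]_n) : is_state rho -> is_state Phi -> is_effect P ->
  1 <= complex.Re (\tr (P *m Phi)) -> fidelity rho Phi <= complex.Re (\tr (P *m rho)).
Proof.
move=> [Hrho trrho] [HPhi trPhi] [HP HE] HPPhi.
have [HR0 R0e] := psd_sqrtP Hrho; have [HQ Qe] := psd_sqrtP HPhi.
rewrite /fidelity /trnorm.
set R0 := psd_sqrt rho in HR0 R0e *; set Q := psd_sqrt Phi in HQ Qe *.
set Y := adjmx (R0 *m Q) *m (R0 *m Q).
have HY : psd Y := psd_adjmul _.
have Ye : Y = Q *m rho *m Q.
  by rewrite /Y adjmxM !psd_herm // -R0e !mulmxA.
have [HS Se] := psd_sqrtP HY.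
set S := psd_sqrt Y in HS Se *.
have [U [q [U1 U2 Hq Qd]]] := psd_spec HQ.
set D := diag_mx q.
have UQ : U *m Q = D *m U by rewrite Qd !mulmxA U1 mul1mx.
have QU : Q *m adjmx U = adjmx U *m D by rewrite Qd -!mulmxA U1 mulmx1.
set K := U *m S *m adjmx U.
have HK : psd K by have := psd_conj (adjmx U) HS; rewrite adjmxK.
set rt := U *m rho *m adjmx U.
have Hrt : psd rt by have := psd_conj (adjmx U) Hrho; rewrite adjmxK.
have KK : K *m K = D *m rt *m D.
  rewrite /K !mulmxA -[U *m S *m adjmx U *m U]mulmxA U2 mulmx1 -[U *m S *m S]mulmxA Se.
  by rewrite Ye !mulmxA UQ -!mulmxA QU.
have key1 : forall j, K j j * (K j j)^* <= q 0 j * rt j j * q 0 j.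
  move=> j; have := mul_adj_diag_ge K j; rewrite psd_herm // KK.
  by rewrite /D mul_mx_diag mxE mul_diag_mx mxE.
have trS : \tr S = \sum_j K j j.
  by rewrite -(tr_conjU S U2).
have trPhi2 : \sum_j q 0 j * q 0 j = 1.
  have PhiD : Phi = adjmx U *m (D *m D) *m U.
    rewrite -Qe Qd !mulmxA -[adjmx U *m D *m U *m adjmx U]mulmxA U1 mulmx1.
    by rewrite -[adjmx U *m D *m D]mulmxA.
  rewrite -trPhi PhiD tr_conjU' // /D mulmx_diag mxtrace_diag.
  by apply: eq_bigr => j _; rewrite mxE.
set E := 1%:M - P.
set Et := U *m E *m adjmx U.
have HEt : psd Et by have := psd_conj (adjmx U) HE; rewrite adjmxK.
set Pt := U *m P *m adjmx U.
have HPt : psd Pt by have := psd_conj (adjmx U) HP; rewrite adjmxK.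
have EPt : Et = 1%:M - Pt by rewrite /Et /E mulmxBr mulmxBl mulmx1 U1.
have trEPhi : \tr (E *m Phi) = \sum_j q 0 j * Et j j * q 0 j.
  have QEQ : Q *m E *m Q = adjmx U *m (D *m Et *m D) *m U by rewrite {1 2}Qd /Et !mulmxA.
  rewrite -Qe mulmxA mxtrace_mulC mulmxA QEQ tr_conjU' // /mxtrace.
  by apply: eq_bigr => j _; rewrite /D mul_mx_diag mxE mul_diag_mx mxE.
have terms0 : forall j, 0 <= q 0 j * Et j j * q 0 j.
  by move=> j; apply: mulr_ge0; [apply: mulr_ge0; [exact: Hq | exact: psd_diag_ge0] | exact: Hq].
have trEPhi0 : \tr (E *m Phi) = 0.
  have h0 : 0 <= \tr (E *m Phi) by rewrite trEPhi; apply: sumr_ge0 => j _; exact: terms0.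
  have hre : complex.Re (\tr (E *m Phi)) <= 0.
    rewrite /E mulmxBl mul1mx linearB /= raddfB /= trPhi.
    by rewrite subr_le0.
  rewrite (ge0_RRe h0); have -> : complex.Re (\tr (E *m Phi)) = 0.
    by apply/le_anti; rewrite hre ge0_Re.
  by [].
have Ejj : forall j, q 0 j != 0 -> Et j j = 0.
  move: trEPhi0; rewrite trEPhi => /eqP; rewrite psumr_eq0 => [/allP h|j _]; last exact: terms0.
  move=> j qj; have := h j (mem_index_enum j).
  by rewrite mulf_eq0 (negbTE qj) orbF mulf_eq0 (negbTE qj) /= => /eqP.
have Pcol : forall j k, q 0 j != 0 -> Pt k j = (k == j)%:R /\ Pt j k = (j == k)%:R.
  move=> j k qj; have [h1 h2] := col_zero HEt (Ejj j qj) k.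
  move: h1 h2; rewrite EPt !mxE => /eqP h1 /eqP h2.
  by split; apply/esym/eqP; rewrite -subr_eq0.
set Dm := diag_mx (\row_j ((q 0 j != 0)%:R : C)).
set Dc := diag_mx (\row_j ((q 0 j == 0)%:R : C)).
have adjDc : adjmx Dc = Dc.
  by apply/matrixP => a b; rewrite adjmxE !mxE rmorphMn rmorph_nat [b == a]eq_sym; case: (eqVneq a b) => // ->.
have PtD : Pt - Dm = adjmx Dc *m Pt *m Dc.
  rewrite adjDc; clearbody Pt; apply/matrixP => a b.
  rewrite /Dc /Dm mul_mx_diag mxE mul_diag_mx !mxE.
  case: (eqVneq (q 0 b) 0) => qb; case: (eqVneq (q 0 a) 0) => qa /=.
  - by rewrite mul0rn subr0; ring.
  - by rewrite (Pcol a b qa).2 subrr; ring.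
  - rewrite (Pcol b a qb).1; case: (eqVneq a b) => [eab|nab].
      by move: qb; rewrite -eab qa eqxx.
    by rewrite mul0rn subr0 mulr0.
  - by rewrite (Pcol b a qb).1 subrr; ring.
have HPtD : psd (Pt - Dm) by rewrite PtD; apply: psd_conj.
have trP : \tr (P *m rho) = \tr (Pt *m rt).
  rewrite /Pt /rt !mulmxA -[U *m P *m adjmx U *m U]mulmxA U2 mulmx1.
  by rewrite -[U *m P *m rho]mulmxA tr_conjU.
have trPt : \tr (Pt *m rt) = \tr (Dm *m rt) + \tr ((Pt - Dm) *m rt).
  by rewrite mulmxBl linearB /= addrC subrK.
have ge1 : 0 <= \tr ((Pt - Dm) *m rt) by apply: tr_psd_mul.
pose c j := if q 0 j != 0 then complex.Re (rt j j) else 0.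
have trDm : complex.Re (\tr (Dm *m rt)) = \sum_j c j.
  rewrite /mxtrace Re_sum; apply: eq_bigr => j _.
  rewrite /Dm mul_diag_mx mxE [X in X * _]mxE /c; case: (q 0 j != 0) => /=.
    by rewrite mul1r.
  by rewrite mul0r.
pose a j := complex.Re (K j j); pose b j := complex.Re (q 0 j) * complex.Re (q 0 j).
have c0 : forall j, 0 <= c j.
  by move=> j; rewrite /c; case: (q 0 j != 0) => //; apply: ge0_Re; apply: psd_diag_ge0.
have b0 : forall j, 0 <= b j by move=> j; apply: mulr_ge0; apply: ge0_Re.
have abc : forall j, a j ^+ 2 <= b j * c j.
  move=> j; have := key1 j.
  rewrite (ge0_conj (psd_diag_ge0 j HK)).
  rewrite (ge0_RRe (psd_diag_ge0 j HK)) (ge0_RRe (Hq j)) (ge0_RRe (psd_diag_ge0 j Hrt)).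
  rewrite -!rmorphM lecR /a /b /c.
  case: (eqVneq (q 0 j) 0) => [->|qj] /=.
    by rewrite !(mul0r, mulr0) expr2.
  by rewrite expr2 => h; apply: (le_trans h); rewrite le_eqVlt; apply/orP; left; apply/eqP; ring.
have sb : \sum_j b j = 1.
  have := congr1 (@complex.Re R) trPhi2; rewrite Re_sum /= => <-.
  apply: eq_bigr => j _; rewrite /b (ge0_RRe (Hq j)) -rmorphM /=.
  by [].
have trSa : complex.Re (\tr S) = \sum_j a j by rewrite trS Re_sum.
rewrite trSa trP trPt raddfD /=.
apply: (le_trans (cs_real b0 c0 abc)); rewrite sb mul1r trDm lerDl.
exact: ge0_Re.
Qed.

End Mx4.
Import Num.Def.
Section Main1.
Variable R : realType.
Local Notation C := R[i].

Lemma ln2_gt0 : (0 : R) < ln 2.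
Proof. by apply: ln_gt0; rewrite ltr1n. Qed.

Lemma log2_le (a b : R) : 0 < a -> a <= b -> log2 a <= log2 b.
Proof.
move=> ha hab; rewrite /log2 ler_pM2r ?invr_gt0 ?ln2_gt0 //.
by rewrite ler_ln // posrE (lt_le_trans ha hab).
Qed.

Lemma log2M (a b : R) : 0 < a -> 0 < b -> log2 (a * b) = log2 a + log2 b.
Proof. by move=> ha hb; rewrite /log2 lnM ?posrE // mulrDl. Qed.

Lemma log2V (a : R) : 0 < a -> log2 a^-1 = - log2 a.
Proof. by move=> ha; rewrite /log2 lnV ?posrE // mulNr. Qed.

Lemma log2_1 : log2 (1 : R) = 0.
Proof. by rewrite /log2 ln1 mul0r. Qed.

Lemma log2_ge0 (a : R) : 1 <= a -> 0 <= log2 a.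
Proof. by move=> ha; rewrite -log2_1; apply: log2_le. Qed.

Lemma ReCM (c : R) (z : C) : complex.Re (c%:C%C * z) = c * complex.Re z.
Proof. by case: z => x y /=; rewrite mul0r subr0. Qed.

Lemma trZ n (P X : 'M[C]_n) (c : R) :
  complex.Re (\tr (P *m (c%:C%C *: X))) = c * complex.Re (\tr (P *m X)).
Proof. by rewrite -scalemxAr linearZ /= ReCM. Qed.

Lemma trD n (P X Y : 'M[C]_n) :
  complex.Re (\tr (P *m (X + Y))) = complex.Re (\tr (P *m X)) + complex.Re (\tr (P *m Y)).
Proof. by rewrite mulmxDr linearD /= raddfD. Qed.

Lemma trZl n (P X : 'M[C]_n) (c : R) :
  complex.Re (\tr ((c%:C%C *: P) *m X)) = c * complex.Re (\tr (P *m X)).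
Proof. by rewrite -scalemxAl linearZ /= ReCM. Qed.

Lemma tr_eff_state n (P X : 'M[C]_n) : is_effect P -> is_state X -> 0 <= complex.Re (\tr (P *m X)).
Proof. by move=> [HP _] [HX _]; apply: ge0_Re; apply: tr_psd_mul. Qed.

Lemma tr_eff_le1 n (P X : 'M[C]_n) : is_effect P -> is_state X -> complex.Re (\tr (P *m X)) <= 1.
Proof.
move=> [_ HE] [HX tX].
have := ge0_Re (tr_psd_mul HE HX).
by rewrite mulmxBl mul1mx linearB /= raddfB /= tX subr_ge0.
Qed.

Lemma psd_scaleR n (c : R) (A : 'M[C]_n) : 0 <= c -> psd A -> psd (c%:C%C *: A).
Proof. by move=> hc; apply: psd_scale; rewrite ler0c. Qed.

Lemma effect_scale n (c : R) (P : 'M[C]_n) : 0 <= c <= 1 -> is_effect P -> is_effect (c%:C%C *: P).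
Proof.
move=> /andP [c0 c1] [HP HE]; split; first exact: psd_scaleR.
have -> : 1%:M - c%:C%C *: P = (1 - c)%:C%C *: 1%:M + c%:C%C *: (1%:M - P).
  rewrite scalerBr addrA -scalerDl rmorphB /= rmorph1 subrK scale1r.
  by [].
apply: psd_add; apply: psd_scaleR => //; first by rewrite subr_ge0.
exact: psd1.
Qed.

Lemma state_mix n (t : R) (Phi tau : 'M[C]_n) : 0 <= t -> is_state Phi -> is_state tau ->
  is_state (((1 + t)^-1)%:C%C *: (Phi + t%:C%C *: tau)).
Proof.
move=> t0 [HP tP] [HT tT]; split.
  apply: psd_scaleR; first by rewrite invr_ge0 addr_ge0.
  by apply: psd_add => //; apply: psd_scaleR.
rewrite linearZ /= linearD /= linearZ /= tP tT mulr1 -(rmorph1 (real_complex R)) -rmorphD -rmorphM.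
rewrite mulVf // gt_eqF //; apply: (lt_le_trans ltr01); by rewrite lerDl.
Qed.

End Main1.
Import Num.Def.
Section Main2.
Variables (R : realType) (n : nat).
Local Notation C := R[i].
Local Notation M := 'M[C]_n.

Lemma DH_up (eps : R) (rho sigma : M) (c : R) : 0 < c ->
  (forall P, is_effect P -> 1 - eps <= complex.Re (\tr (P *m rho)) ->
     c <= complex.Re (\tr (P *m sigma))) ->
  (DH eps rho sigma <= (- log2 c)%:E)%E.
Proof.
move=> c0 H; apply/ereal_supP => _ [P [HP HPr] <-].
have hc := H P HP HPr.
rewrite /mlog2 ifF; last by apply/negbTE; rewrite -ltNge (lt_le_trans c0 hc).
by rewrite lee_fin lerN2; apply: log2_le.
Qed.

Lemma DH_lo (eps : R) (rho sigma : M) : 0 <= eps < 1 ->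
  (DH 0 rho sigma + (log2 (1 - eps)^-1)%:E <= DH eps rho sigma)%E.
Proof.
move=> /andP [e0 e1].
have e1' : 0 < 1 - eps by rewrite subr_gt0.
rewrite -leeBrDr //; apply/ereal_supP => _ [P [HP HPr] <-].
set P' := (1 - eps)%:C%C *: P.
have HP' : is_effect P'.
  by apply: effect_scale => //; rewrite ltW //= lerBlDr lerDl.
have HP'r : 1 - eps <= complex.Re (\tr (P' *m rho)).
  rewrite trZl; rewrite subr0 in HPr.
  by rewrite -{1}[1 - eps]mulr1 ler_wpM2l // ltW.
have hub : (mlog2 (complex.Re (\tr (P' *m sigma))) <= DH eps rho sigma)%E.
  by apply: ereal_sup_ubound; exists P'.
move: hub; rewrite trZl /mlog2.
case: (lerP (complex.Re (\tr (P *m sigma))) 0) => hx.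
  rewrite ifT; last by rewrite pmulr_rle0.
  by rewrite leye_eq => /eqP ->.
rewrite ifF; last by apply/negbTE; rewrite -ltNge mulr_gt0.
rewrite leeBrDr // -EFinD => h; apply: le_trans h.
rewrite lee_fin log2M // log2V //; lra.
Qed.

Lemma DHo_lo (eps : R) (S : set M) (rho : M) : 0 <= eps < 1 ->
  (DH_over 0 S rho + (log2 (1 - eps)^-1)%:E <= DH_over eps S rho)%E.
Proof.
move=> he; apply/ereal_infP => _ [sig Ssig <-].
apply: le_trans (DH_lo rho sig he); apply: leeD2r.
by apply: ereal_inf_lbound; exists sig.
Qed.

Lemma tr_sig (P X tau : M) (s : R) : is_effect P -> is_state tau -> 0 <= s ->
  (1 + s)^-1 * complex.Re (\tr (P *m X)) <=
  complex.Re (\tr (P *m (((1 + s)^-1)%:C%C *: (X + s%:C%C *: tau)))).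
Proof.
move=> HP Ht s0; rewrite trZ trD trZ ler_wpM2l //; first by rewrite invr_ge0 addr_ge0.
by rewrite lerDl mulr_ge0 // tr_eff_state.
Qed.

Lemma log2_c (eps s : R) : 0 <= eps < 1 -> 0 <= s ->
  - log2 ((1 + s)^-1 * (1 - eps)) = log2 (1 + s) + log2 (1 - eps)^-1.
Proof.
move=> /andP [e0 e1] s0.
have h1 : 0 < 1 + s by apply: (lt_le_trans ltr01); rewrite lerDl.
have h2 : 0 < 1 - eps by rewrite subr_gt0.
rewrite log2M ?invr_gt0 // !log2V //; lra.
Qed.

Lemma inf_max_le (A : set (\bar R)) (y : \bar R) (L : R) :
  (forall x, A x -> y <= maxe (x - L%:E) 0)%E -> (y <= maxe (ereal_inf A - L%:E) 0)%E.
Proof.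
move=> H; case: (leP y 0%E) => hy; first by rewrite le_max hy orbT.
rewrite le_max; apply/orP; left.
rewrite leeBrDr //; apply/ereal_infP => x Ax.
have := H x Ax; rewrite le_max (leNgt y 0%E) hy orbF.
by rewrite leeBrDr.
Qed.

End Main2.
Import Num.Def.
Section Main3.
Variables (R : realType) (n : nat).
Local Notation C := R[i].
Local Notation M := 'M[C]_n.

Definition DG (G S : set M) (rho : M) : \bar R :=
  ereal_inf [set (log2 (1 + s))%:E | s in
    [set s : R | 0 <= s /\ exists tau : M, G tau /\
                  S (((1 + s)^-1)%:C%C *: (rho + s%:C%C *: tau))]].

Lemma DmaxF_DG (S : set M) rho : DmaxF S rho = DG (@is_state R n) S rho.
Proof. by []. Qed.
Lemma DsF_DG (S : set M) rho : DsF S rho = DG S S rho.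
Proof. by []. Qed.

Lemma DHo_up (G S : set M) (Phi : M) (eps : R) : (forall t, G t -> is_state t) ->
  is_state Phi -> 0 <= eps < 1 ->
  (DH_over eps S Phi <= DG G S Phi + (log2 (1 - eps)^-1)%:E)%E.
Proof.
move=> HG HPhi he; have /andP [e0 e1] := he.
rewrite -leeBlDr //; apply/ereal_infP => _ [s [s0 [tau [Gt Ssig]]] <-].
rewrite leeBlDr // -EFinD.
set sig := ((1 + s)^-1)%:C%C *: (Phi + s%:C%C *: tau) in Ssig *.
have h1 : 0 < 1 + s by apply: (lt_le_trans ltr01); rewrite lerDl.
apply: le_trans (_ : DH eps Phi sig <= _)%E.
  by apply: ereal_inf_lbound; exists sig.
rewrite -log2_c //; apply: DH_up.
  by rewrite mulr_gt0 ?invr_gt0 // subr_gt0.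
move=> P HP HPr; apply: le_trans (tr_sig _ HP (HG _ Gt) s0).
by rewrite ler_wpM2l // invr_ge0 ltW.
Qed.

Lemma DG_lo (G S : set M) (Phi rho' : M) (eps : R) (r : \bar R) :
  (forall t, G t -> is_state t) -> is_state Phi -> is_state rho' -> 0 <= eps < 1 ->
  1 - eps <= fidelity rho' Phi -> (forall sig, S sig -> r <= DH 0 Phi sig)%E ->
  (maxe (r - (log2 (1 - eps)^-1)%:E) 0 <= DG G S rho')%E.
Proof.
move=> HG HPhi Hr he hf Hr'; have /andP [e0 e1] := he.
apply/ereal_infP => _ [s [s0 [tau [Gt Ssig]]] <-].
have h1 : 0 < 1 + s by apply: (lt_le_trans ltr01); rewrite lerDl.
rewrite ge_max; apply/andP; split; last by rewrite lee_fin log2_ge0 // lerDl.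
rewrite leeBlDr //; apply: le_trans (Hr' _ Ssig) _; rewrite -EFinD -log2_c //.
apply: DH_up; first by rewrite mulr_gt0 ?invr_gt0 // subr_gt0.
move=> P HP HPr; apply: le_trans (tr_sig _ HP (HG _ Gt) s0).
rewrite ler_wpM2l //; first by rewrite invr_ge0 ltW.
apply: (le_trans hf).
by apply: fid_ub => //; rewrite -[1](subr0 1).
Qed.

Lemma comb (a b t u s : R) (X Y : M) : a * (b * t + u) = a * b * s ->
  a%:C%C *: (b%:C%C *: (X + t%:C%C *: Y) + u%:C%C *: Y) = (a * b)%:C%C *: (X + s%:C%C *: Y).
Proof.
move=> h; have hC := congr1 (real_complex R) h.
rewrite !rmorphM rmorphD rmorphM /= in hC.
apply/matrixP => i j; rewrite !mxE rmorphM.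
transitivity (a%:C%C * b%:C%C * X i j + a%:C%C * (b%:C%C * t%:C%C + u%:C%C) * Y i j); first by ring.
by rewrite hC; ring.
Qed.

End Main3.
Import Num.Def.
Section Main4.
Variables (R : realType) (n : nat).
Local Notation C := R[i].
Local Notation M := 'M[C]_n.

Lemma DG_up (G S : set M) (Phi : M) (eps : R) : (forall t, G t -> is_state t) ->
  is_state Phi -> 0 <= eps < 1 ->
  (ereal_inf [set DG G S rho' | rho' in
     [set rho' : M | is_state rho' /\ (1 - eps <= fidelity rho' Phi)%R]]
   <= maxe (DG G S Phi - (log2 (1 - eps)^-1)%:E) 0)%E.
Proof.
move=> HG HPhi he; have /andP [e0 e1] := he.
apply: inf_max_le => _ [s [s0 [tau [Gt Ssig]]] <-].
have Ht := HG _ Gt.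
have e1' : 0 < 1 - eps by rewrite subr_gt0.
set t := eps / (1 - eps).
have t0 : 0 <= t by rewrite divr_ge0 // ltW.
have t1 : 1 + t = (1 - eps)^-1.
  rewrite /t -[X in X + _](divff (lt0r_neq0 e1')) -mulrDl.
  by rewrite subrK mul1r.
set t' := Num.min t s.
have t'0 : 0 <= t' by rewrite le_min t0 s0.
have t't : t' <= t by rewrite ge_min lexx.
have t's : t' <= s by rewrite ge_min lexx orbT.
have h1 : 0 < 1 + t' by apply: (lt_le_trans ltr01); rewrite lerDl.
have h1s : 0 < 1 + s by apply: (lt_le_trans ltr01); rewrite lerDl.
set p := (1 + t')^-1.
set rho' := p%:C%C *: (Phi + t'%:C%C *: tau).
have Hrho' : is_state rho' by apply: state_mix.
have hfid : 1 - eps <= fidelity rho' Phi.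
  apply: le_trans (fid_lb (p := p) HPhi (proj1 Hrho') _ _).
    have h1t : 0 < 1 + t by apply: (lt_le_trans ltr01); rewrite lerDl.
    by rewrite /p -[1 - eps]invrK -t1 lef_pV2 ?posrE // lerD2l.
    by rewrite /p invr_ge0 ltW.
  have -> : rho' - p%:C%C *: Phi = (p * t')%:C%C *: tau.
    by apply/matrixP => i j; rewrite !mxE rmorphM; ring.
  by apply: psd_scaleR; [rewrite mulr_ge0 // invr_ge0 ltW | exact: Ht.1].
set s' := (s - t') / (1 + t').
have s'0 : 0 <= s' by rewrite divr_ge0 ?subr_ge0 // ltW.
have s'e : 1 + s' = (1 + s) / (1 + t').
  rewrite /s' -[X in X + _](divff (lt0r_neq0 h1)) -mulrDl.
  by congr (_ / _); ring.
have Ssig' : S (((1 + s')^-1)%:C%C *: (rho' + s'%:C%C *: tau)).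
  have -> : (1 + s')^-1 = (1 + s)^-1 * (1 + t') by rewrite s'e invf_div mulrC.
  rewrite /rho'.
  have -> : ((1 + s)^-1 * (1 + t'))%:C%C *: (p%:C%C *: (Phi + t'%:C%C *: tau) + s'%:C%C *: tau)
      = (((1 + s)^-1 * (1 + t')) * p)%:C%C *: (Phi + s%:C%C *: tau).
    apply: comb.
    by rewrite /s' /p; ring.
  rewrite -mulrA /p mulfV ?mulr1 //; exact: lt0r_neq0.
apply: (@le_trans _ _ (DG G S rho')).
  by apply: ereal_inf_lbound; exists rho'.
apply: (@le_trans _ _ (log2 (1 + s'))%:E).
  by apply: ereal_inf_lbound; exists s' => //; split => //; exists tau.
have l2 : log2 (1 + s') = log2 (1 + s) - log2 (1 + t').
  by rewrite s'e log2M ?invr_gt0 // log2V.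
rewrite -EFinB le_max !lee_fin l2.
case: (leP t s) => hts.
  have -> : t' = t by rewrite /t' min_l.
  by rewrite t1 lexx.
have -> : t' = s by rewrite /t' min_r // ltW.
by rewrite subrr lexx orbT.
Qed.


End Main4.
Section Final.
Variables (R : realType) (n : nat).
Local Notation C := R[i].
Local Notation M := 'M[C]_n.

Lemma sub_aff (F : set M) X : F X -> aff F X.
Proof.
move=> FX; exists 1%N, (fun _ => 1), (fun _ => X); split => //; split.
  by rewrite big_ord1.
by rewrite big_ord1 rmorph1 scale1r.
Qed.

Lemma DG_mono (G1 G2 S : set M) rho : (forall t, G1 t -> G2 t) ->
  (DG G2 S rho <= DG G1 S rho)%E.
Proof.
move=> H; apply/ereal_infP => _ [s [s0 [tau [Gt Ssig]]] <-].
by apply: ereal_inf_lbound; exists s => //; split => //; exists tau; split => //; apply: H.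
Qed.

Lemma DG_eps_mono (G1 G2 S : set M) Phi (eps : R) : (forall t, G1 t -> G2 t) ->
  (ereal_inf [set DG G2 S rho' | rho' in
     [set rho' : M | is_state rho' /\ (1 - eps <= fidelity rho' Phi)%R]] <=
   ereal_inf [set DG G1 S rho' | rho' in
     [set rho' : M | is_state rho' /\ (1 - eps <= fidelity rho' Phi)%R]])%E.
Proof.
move=> H; apply/ereal_infP => _ [rho' Hr <-].
apply: le_trans (DG_mono S rho' H).
by apply: ereal_inf_lbound; exists rho'.
Qed.

End Final.

Local Close Scope sesquilinear_scope.

Theorem proposition1 (R : realType) (n : nat) (F : set 'M[R[i]]_n)
  (Phi : 'M[R[i]]_n) :
  (forall sigma, F sigma -> is_state sigma) ->
  convex_states F -> closed_mx F ->
  is_state Phi ->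
  (forall r : \bar R, DminF F Phi = r -> DsF F Phi = r ->
     forall eps : R, 0 <= eps < 1 ->
       DH_over eps F Phi = (r + (log2 (1 - eps)^-1)%:E)%E /\
       DmaxF_eps eps F Phi = maxe (r - (log2 (1 - eps)^-1)%:E)%E 0%E /\
       DsF_eps eps F Phi = maxe (r - (log2 (1 - eps)^-1)%:E)%E 0%E) /\
  (forall r : \bar R, DminAff F Phi = r -> DmaxF F Phi = r ->
     forall eps : R, 0 <= eps < 1 ->
       DH_over eps (aff F) Phi = (r + (log2 (1 - eps)^-1)%:E)%E /\
       DH_over eps F Phi = (r + (log2 (1 - eps)^-1)%:E)%E /\
       DmaxF_eps eps F Phi = maxe (r - (log2 (1 - eps)^-1)%:E)%E 0%E).
Proof.
move=> HF _ _ HPhi.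
have Hst : forall t : 'M[R[i]]_n, is_state t -> is_state t by [].
split.
  move=> r Hmin Hs eps he.
  have lo := DHo_lo F Phi he.
  have up := DHo_up F HF HPhi he.
  rewrite -/(DminF F Phi) Hmin in lo.
  rewrite -DsF_DG Hs in up.
  have lo2 : (maxe (r - (log2 (1 - eps)^-1)%:E) 0 <= DmaxF_eps eps F Phi)%E.
    apply/ereal_infP => _ [rho' [Hr hf] <-].
    apply: DG_lo Hst HPhi Hr he hf _ => sig Fsig.
    by rewrite -Hmin; apply: ereal_inf_lbound; exists sig.
  have mid : (DmaxF_eps eps F Phi <= DsF_eps eps F Phi)%E.
    by apply: DG_eps_mono => t /HF.
  have up2 : (DsF_eps eps F Phi <= maxe (r - (log2 (1 - eps)^-1)%:E) 0)%E.
    by rewrite -Hs; apply: DG_up HF HPhi he.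
  split; first by apply/le_anti; rewrite up lo.
  split; apply/le_anti.
    by rewrite lo2 (le_trans mid up2).
  by rewrite up2 (le_trans lo2 mid).
move=> r Hmin Hmax eps he.
have lo := DHo_lo (aff F) Phi he.
rewrite -/(DminAff F Phi) Hmin in lo.
have up := DHo_up F Hst HPhi he.
rewrite -DmaxF_DG Hmax in up.
have sub : (DH_over eps (aff F) Phi <= DH_over eps F Phi)%E.
  apply/ereal_infP => _ [sig Fsig <-].
  by apply: ereal_inf_lbound; exists sig => //; apply: sub_aff.
have lo2 : (maxe (r - (log2 (1 - eps)^-1)%:E) 0 <= DmaxF_eps eps F Phi)%E.
  apply/ereal_infP => _ [rho' [Hr hf] <-].
  apply: DG_lo Hst HPhi Hr he hf _ => sig Fsig.
  by rewrite -Hmin; apply: ereal_inf_lbound; exists sig => //; apply: sub_aff.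
have up2 : (DmaxF_eps eps F Phi <= maxe (r - (log2 (1 - eps)^-1)%:E) 0)%E.
  by rewrite -Hmax; apply: DG_up Hst HPhi he.
split; first by apply/le_anti; rewrite (le_trans sub up) lo.
split; first by apply/le_anti; rewrite up (le_trans lo sub).
by apply/le_anti; rewrite up2 lo2.
Qed.
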